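(* Let $X$ be a topological space and let $(x_n)_{n\in\omega}$ be a sequence of pairwise distinct points of $X$ such that the subspace $\{x_n : n\in\omega\}$ is homeomorphic to $\mathbb{Q}$. Fix a metric $d$ on $\{x_n:n\in\omega\}$ compatible with its subspace topology. Call $A\subseteq\omega$ scattered if there is no $B\subseteq A$ such that the subspace $\{x_n:n\in B\}$ is homeomorphic to $\mathbb{Q}$; let $\mathcal{I}$ be the family of scattered subsets of $\omega$ and $\mathcal{I}^+=\mathcal{P}(\omega)\setminus\mathcal{I}$. For $i,j\in\omega$ let $A_{i,j}=\{n\in\omega : d(x_n,x_i)<\frac{1}{j+1}\}$. Then: (1) for every $A\subseteq\omega$, $A\in\mathcal{I}^+$ if and only if there exists a nonempty $B\subseteq A$ such that for all $i\in B$ and all $j\in\omega$ there is $n\in B\cap A_{i,j}$ with $n\neq i$; (2) for every $A\in\mathcal{I}^+$ there exists $B\subseteq A$ with $B\in\mathcal{I}^+$ such that $B\cap A_{i,j}\in\mathcal{I}^+$ for all $i\in B$ and all $j\in\omega$.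
   Context: $\omega$ denotes the set of natural numbers and $\mathcal{P}(\omega)$ its power set. $\mathbb{Q}$ carries its usual topology. *)

(* Defs.v *)
From HB Require Import structures.
From mathcomp Require Import all_boot all_order all_algebra.
From mathcomp Require Import all_classical all_reals all_analysis.
Set Implicit Arguments. Unset Strict Implicit. Unset Printing Implicit Defensive.
Import Order.TTheory GRing.Theory Num.Theory.
Local Open Scope classical_set_scope.
Local Open Scope ring_scope.

Definition Q_open (U : set rat) : Prop :=
  forall q, U q -> exists e : rat, 0 < e /\ forall r : rat, `|r - q| < e -> U r.

Definition rel_open (X : topologicalType) (S U : set X) : Prop :=
  exists V : set X, open V /\ U = V `&` S.

Definition homeo_Q (X : topologicalType) (S : set X) : Prop :=
  exists (f : X -> rat) (g : rat -> X),
    (forall s, S s -> g (f s) = s) /\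
    (forall q, S (g q) /\ f (g q) = q) /\
    (forall U : set rat, Q_open U -> rel_open S (S `&` f @^-1` U)) /\
    (forall U : set X, rel_open S U -> U `<=` S -> Q_open (g @^-1` U)).

Definition metric_on (R : realType) (X : Type) (S : set X) (d : X -> X -> R) : Prop :=
  (forall a b, S a -> S b -> 0 <= d a b) /\
  (forall a b, S a -> S b -> d a b = 0 <-> a = b) /\
  (forall a b, S a -> S b -> d a b = d b a) /\
  (forall a b c, S a -> S b -> S c -> d a c <= d a b + d b c).

Definition compatible (R : realType) (X : topologicalType) (S : set X)
    (d : X -> X -> R) : Prop :=
  forall U : set X, U `<=` S ->
    (rel_open S U <->
     forall u, U u -> exists e : R, 0 < e /\ forall s, S s -> d u s < e -> U s).

Definition scattered (X : topologicalType) (x : nat -> X) (A : set nat) : Prop :=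
  ~ exists B : set nat, B `<=` A /\ homeo_Q (x @` B).

Definition Aij (R : realType) (X : Type) (x : nat -> X) (d : X -> X -> R)
    (i j : nat) : set nat :=
  [set n | d (x n) (x i) < (j.+1%:R)^-1].

(* Main.v *)
Require Import Defs.
From HB Require Import structures.
From mathcomp Require Import all_boot all_order all_algebra.
From mathcomp Require Import all_classical all_reals all_analysis.
From mathcomp Require Import ring lra.
Import Order.TTheory GRing.Theory Num.Theory.
Local Open Scope classical_set_scope.
Local Open Scope ring_scope.



Definition btw {R : realType} (a b z : R) := (a < z /\ z < b) \/ (b < z /\ z < a).

Inductive dos (pa : nat -> nat) (c : nat) : nat -> Prop :=
| dos_refl : dos pa c c
| dos_step w : (0 < w)%N -> dos pa c (pa w) -> dos pa c w.

Lemma dos_le {pa c w} : (forall m, (0 < m)%N -> (pa m < m)%N) -> dos pa c w -> (c <= w)%N.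
Proof.
move=> hpa; elim=> [//|w' w0 _ IH].
by apply: (leq_trans IH); apply: ltnW; apply: hpa.
Qed.

Lemma fin_pos {R : realType} (f : nat -> R) (Q : nat -> Prop) n :
  (forall j, (j < n)%N -> Q j -> 0 < f j) ->
  exists2 e, 0 < e & forall j, (j < n)%N -> Q j -> e <= f j.
Proof.
elim: n => [|n IH] h.
  by exists 1 => // j.
have [e e0 he] : exists2 e, 0 < e & forall j, (j < n)%N -> Q j -> e <= f j.
  by apply: IH => j jn; apply: h; apply: ltnW.
case: (pselect (Q n)) => qn.
  have fn := h n (ltnSn n) qn.
  case: (lerP e (f n)) => hle.
    exists e => // j; rewrite ltnS leq_eqVlt => /orP[/eqP->//|jn]; exact: he.
  exists (f n) => // j; rewrite ltnS leq_eqVlt => /orP[/eqP->//|jn] qj.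
  by apply: (le_trans (ltW hle)); apply: he.
exists e => // j; rewrite ltnS leq_eqVlt => /orP[/eqP->//|jn]; exact: he.
Qed.



Section QSide.
Variable R : realType.
Variable r : nat -> rat.
Hypothesis r_inj : injective r.

Local Notation rr j := (ratr (r j) : R).

Lemma ratrI (a b : rat) : (ratr a : R) = ratr b -> a = b.
Proof. by move=> h; apply/eqP; rewrite eq_le -!(@ler_rat R) h lexx. Qed.

Definition cutv (a b : R) : R := a + (b - a) / pi.

Lemma pi_gt1 : 1 < (pi : R).
Proof. have := @pi_ge2 R; lra. Qed.

Lemma cutv_btw a b : a <> b -> btw a b (cutv a b).
Proof.
move=> ab; rewrite /cutv /btw.
have h1 : 0 < (pi : R)^-1 by rewrite invr_gt0 pi_gt0.
have h2 : (pi : R)^-1 < 1 by rewrite invf_lt1 ?pi_gt0 ?pi_gt1.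
set t := (pi : R)^-1.
have [hab|hba|//] := ltgtP a b.
- have hu : 0 < b - a by lra.
  have k1 : 0 < (b - a) * t by rewrite mulr_gt0.
  have k2 : 0 < (b - a) * (1 - t) by rewrite mulr_gt0 // subr_gt0.
  left; split; lra.
- have hu : 0 < a - b by lra.
  have k1 : 0 < (a - b) * t by rewrite mulr_gt0.
  have k2 : 0 < (a - b) * (1 - t) by rewrite mulr_gt0 // subr_gt0.
  right; split; lra.
Qed.

Lemma cutv_irr (a b q : rat) : a <> b -> cutv (ratr a) (ratr b) <> (ratr q : R).
Proof.
move=> ab h.
have e : (ratr b - ratr a : R) / pi = ratr q - ratr a.
  by rewrite -h /cutv addrAC subrr add0r.
have qa : q <> a.
  move=> qa; subst q.
  move: e; rewrite subrr => /eqP.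
  rewrite mulf_eq0 invr_eq0 (gt_eqF (@pi_gt0 R)) orbF subr_eq0.
  by move/eqP/ratrI/esym.
apply: (@pi_irrationnal R).
exists ((b - a) / (q - a)) => //.
have hq : (ratr q - ratr a : R) != 0.
  by rewrite subr_eq0; apply/eqP => /ratrI.
have hp : (pi : R) != 0 by rewrite gt_eqF ?pi_gt0.
have hb : (ratr b - ratr a : R) != 0.
  by rewrite subr_eq0; apply/eqP => /ratrI /esym.
rewrite fmorph_div !rmorphB /= -e invf_div mulrC divfK //.
Qed.

Definition Mk (C : nat -> R) (n : nat) (z : R) : Prop :=
  (exists2 j, (j < n)%N & z = rr j) \/ (exists2 j, (0 < j < n)%N & z = C j).

Lemma MkS C n z : Mk C n.+1 z <-> Mk C n z \/ z = rr n \/ ((0 < n)%N /\ z = C n).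
Proof.
split.
- case=> [[j jn ->]|[j /andP[j0 jn] ->]].
  + move: jn; rewrite ltnS leq_eqVlt => /orP[/eqP->|jn].
      by right; left.
    by left; left; exists j.
  + move: jn; rewrite ltnS leq_eqVlt => /orP[/eqP ej|jn].
      by subst j; right; right.
    by left; right; exists j; rewrite ?j0.
- case=> [[[j jn ->]|[j /andP[j0 jn] ->]]|[->|[n0 ->]]].
  + by left; exists j => //; apply: ltnW.
  + by right; exists j => //; rewrite j0 /= ltnW.
  + by left; exists n.
  + by right; exists n => //; rewrite n0 /=.
Qed.

Lemma Mk_mono C n m z : (n <= m)%N -> Mk C n z -> Mk C m z.
Proof.
move=> nm [[j jn ->]|[j /andP[j0 jn] ->]].
- by left; exists j => //; apply: leq_trans nm.
- by right; exists j => //; rewrite j0 /= (leq_trans jn nm).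
Qed.

Lemma Mk_ext C C' n : (forall j, (j < n)%N -> C j = C' j) -> Mk C n = Mk C' n.
Proof.
move=> h; apply/funext => z; apply/propext; rewrite /Mk; split.
- case=> [?|[j /andP[j0 jn] ->]]; [by left|right; exists j; rewrite ?j0 //].
  by rewrite h.
- case=> [?|[j /andP[j0 jn] ->]]; [by left|right; exists j; rewrite ?j0 //].
  by rewrite h.
Qed.

Lemma Mk_max {C n a} : (exists z, Mk C n z /\ z < a) ->
  exists z0, [/\ Mk C n z0, z0 < a & forall z, Mk C n z -> z < a -> z <= z0].
Proof.
elim: n => [|n IH].
  by case=> z [[[j]|[j /andP[_]]]].
move=> hex.
pose cand z := Mk C n z \/ z = rr n \/ ((0 < n)%N /\ z = C n).
have hcand z : Mk C n.+1 z <-> cand z by exact: MkS.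
have step : forall z1, Mk C n.+1 z1 -> z1 < a ->
   (forall z, Mk C n z -> z < a -> z <= z1) ->
   exists z0, [/\ Mk C n.+1 z0, z0 < a & forall z, Mk C n.+1 z -> z < a -> z <= z0].
  move=> z1 hz1 z1a hb.
  pose m1 := if (rr n < a) && (z1 < rr n) then rr n else z1.
  have hm1 : Mk C n.+1 m1 /\ m1 < a /\ z1 <= m1 /\ (rr n < a -> rr n <= m1).
    rewrite /m1; case: ifP => [/andP[h1 h2]|/negbT].
      by split; [apply/hcand; right; left|split => //; split; [apply: ltW|]].
    rewrite negb_and -!leNgt => h; split => //; split => //; split => // h1.
    by case/orP: h => //; rewrite leNgt h1.
  case: hm1 => hm1a [hm1b [hm1c hm1d]].
  case: (boolP ((0 < n)%N && (C n < a) && (m1 < C n))) => [/andP[/andP[n0 h1] h2]|h].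
    exists (C n); split => //; first by apply/hcand; right; right.
    move=> z /hcand [hz|[->|[_ ->]]] za //.
    + have := hb z hz za; lra.
    + have := hm1d za; lra.
  exists m1; split => //.
  move=> z /hcand [hz|[->|[n0 ->]]] za.
  + have := hb z hz za; lra.
  + exact: hm1d.
  + by move: h; rewrite n0 za /= -leNgt.
case: (pselect (exists z, Mk C n z /\ z < a)) => [/IH [z0 [h1 h2 h3]]|hno].
  by apply: (step z0) => //; apply: Mk_mono h1.
case: hex => z [/hcand hz za].
case: hz => [hz|hz]; first by exfalso; apply: hno; exists z.
apply: (step z) => //; first by apply/hcand; right.
by move=> z' hz' z'a; exfalso; apply: hno; exists z'.
Qed.


Lemma Mk_min {C n a} : (exists z, Mk C n z /\ a < z) ->
  exists z0, [/\ Mk C n z0, a < z0 & forall z, Mk C n z -> a < z -> z0 <= z].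
Proof.
elim: n => [|n IH].
  by case=> z [[[j]|[j /andP[_]]]].
move=> hex.
have hcand z : Mk C n.+1 z <-> (Mk C n z \/ z = rr n \/ ((0 < n)%N /\ z = C n)).
  exact: MkS.
have step : forall z1, Mk C n.+1 z1 -> a < z1 ->
   (forall z, Mk C n z -> a < z -> z1 <= z) ->
   exists z0, [/\ Mk C n.+1 z0, a < z0 & forall z, Mk C n.+1 z -> a < z -> z0 <= z].
  move=> z1 hz1 z1a hb.
  pose m1 := if (a < rr n) && (rr n < z1) then rr n else z1.
  have hm1 : Mk C n.+1 m1 /\ a < m1 /\ m1 <= z1 /\ (a < rr n -> m1 <= rr n).
    rewrite /m1; case: ifP => [/andP[h1 h2]|/negbT].
      by split; [apply/hcand; right; left|split => //; split; [apply: ltW|]].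
    rewrite negb_and -!leNgt => h; split => //; split => //; split => // h1.
    by case/orP: h => //; rewrite leNgt h1.
  case: hm1 => hm1a [hm1b [hm1c hm1d]].
  case: (boolP ((0 < n)%N && (a < C n) && (C n < m1))) => [/andP[/andP[n0 h1] h2]|h].
    exists (C n); split => //; first by apply/hcand; right; right.
    move=> z /hcand [hz|[->|[_ ->]]] za //.
    + have := hb z hz za; lra.
    + have := hm1d za; lra.
  exists m1; split => //.
  move=> z /hcand [hz|[->|[n0 ->]]] za.
  + have := hb z hz za; lra.
  + exact: hm1d.
  + by move: h; rewrite n0 za /= -leNgt.
case: (pselect (exists z, Mk C n z /\ a < z)) => [/IH [z0 [h1 h2 h3]]|hno].
  by apply: (step z0) => //; apply: Mk_mono h1.
case: hex => z [/hcand hz za].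
case: hz => [hz|hz]; first by exfalso; apply: hno; exists z.
apply: (step z) => //; first by apply/hcand; right.
by move=> z' hz' z'a; exfalso; apply: hno; exists z'.
Qed.

Lemma min_pos {e1 e2 : R} : 0 < e1 -> 0 < e2 -> exists e, [/\ 0 < e, e <= e1 & e <= e2].
Proof.
move=> h1 h2; case: (lerP e1 e2) => h.
  by exists e1; split.
by exists e2; split => //; apply: ltW.
Qed.

Lemma sep1 (v a : R) : exists2 e, 0 < e & (v <> a -> v <= a - e \/ a + e <= v).
Proof.
case: (ltgtP v a) => h.
- by exists (a - v); [lra|move=> _; left; lra].
- by exists (v - a); [lra|move=> _; right; lra].
- by exists 1 => //.
Qed.

Lemma Mk_sep C n a : exists2 e, 0 < e &
  forall z, Mk C n z -> z <> a -> z <= a - e \/ a + e <= z.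
Proof.
elim: n => [|n [e e0 he]].
  by exists 1 => // z [[j]|[j /andP[_]]].
have [e1 e10 he1] := sep1 (rr n) a.
have [e2 e20 he2] := sep1 (C n) a.
have [f [f0 fe fe1]] := min_pos e0 e10.
have [g [g0 gf ge2]] := min_pos f0 e20.
exists g => // z /MkS [hz|[->|[_ ->]]] za.
- have := he z hz za; lra.
- have := he1 za; lra.
- have := he2 za; lra.
Qed.

Definition adjC (C : nat -> R) n p := forall z, Mk C n z -> ~ btw (rr p) (rr n) z.

Fixpoint st (n : nat) : (nat -> nat) * (nat -> R) :=
  match n with
  | 0 => (fun _ => 0%N, fun _ => 0)
  | m.+1 => let PC := st m in
     let p := xget 0%N [set p | (p < m)%N /\ adjC PC.2 m p] in
     (fun j => if j == m then p else PC.1 j,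
      fun j => if j == m then cutv (rr p) (rr m) else PC.2 j)
  end.

Definition par n := (st n.+1).1 n.
Definition cut n := (st n.+1).2 n.

Lemma st_agree m j : (j < m)%N -> (st m).1 j = par j /\ (st m).2 j = cut j.
Proof.
elim: m => [//|m IH]; rewrite ltnS leq_eqVlt => /orP[/eqP->|jm] //.
have := IH jm; rewrite /= (ltn_eqF jm) => -[<- <-]; by [].
Qed.

Lemma par_def n : par n = xget 0%N [set p | (p < n)%N /\ adjC cut n p].
Proof.
rewrite /par /= eqxx.
have e : Mk (st n).2 n = Mk cut n.
  by apply: Mk_ext => j jn; case: (@st_agree n j jn).
by rewrite /adjC e.
Qed.

Lemma cut_def n : cut n = cutv (rr (par n)) (rr n).
Proof. by rewrite /cut /par /= eqxx. Qed.

Lemma par0 : par 0 = 0%N.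
Proof.
rewrite par_def; case: xgetP => //= p hp [/=]; by [].
Qed.


Definition Inv1 n := forall i j, (i < n)%N -> (j < n)%N -> i <> j ->
  exists2 m, (0 < m < n)%N & btw (rr i) (rr j) (cut m).
Definition Inv2 n := forall m, (0 < m < n)%N ->
  (exists i, [/\ (i < n)%N, cut m < rr i &
       forall z, Mk cut n z -> ~ (cut m < z /\ z < rr i)]) /\
  (exists i, [/\ (i < n)%N, rr i < cut m &
       forall z, Mk cut n z -> ~ (rr i < z /\ z < cut m)]).
Definition ParOK m := (par m < m)%N /\ adjC cut m (par m).
Definition Good n := (forall m, (0 < m < n)%N -> ParOK m) /\ Inv1 n /\ Inv2 n.

Lemma neqlt {a b : R} : a <> b -> a < b \/ b < a.
Proof. by case: (ltgtP a b) => h; [left|right|]. Qed.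

Lemma rr_inj {i j} : rr i = rr j -> i = j.
Proof. by move/ratrI/r_inj. Qed.

Lemma rr_neq {i j} : i <> j -> rr i <> rr j.
Proof. by move=> h /rr_inj. Qed.

Lemma cut_neq {m} i : (par m < m)%N -> cut m <> rr i.
Proof.
move=> pm; rewrite cut_def; apply: cutv_irr => /r_inj e.
by move: pm; rewrite e ltnn.
Qed.

Lemma cut_btw {m} : (par m < m)%N -> btw (rr (par m)) (rr m) (cut m).
Proof.
move=> pm; rewrite cut_def; apply: cutv_btw; apply: rr_neq => e.
by move: pm; rewrite e ltnn.
Qed.

Lemma exist_adj n : (0 < n)%N -> Good n -> exists p, (p < n)%N /\ adjC cut n p.
Proof.
move=> n0 [hpar [hi1 hi2]].
have nm : forall i, (i < n)%N -> rr i <> rr n.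
  by move=> i ilt; apply: rr_neq => e; move: ilt; rewrite e ltnn.
case: (pselect (exists z, Mk cut n z /\ z < rr n)) => [hex|hno].
  have [z0 [hz0 z0n hmax]] := Mk_max hex.
  case: hz0 => [[j jn ej]|[m hm ej]]; subst z0.
    exists j; split => // z hz [[h1 h2]|[h1 h2]].
      by have := hmax z hz h2; lra.
    lra.
  have [[i [ilt hi hno']] _] := hi2 m hm.
  case: (neqlt (nm i ilt)) => hin.
    have : Mk cut n (rr i) by left; exists i.
    by move/hmax => /(_ hin); lra.
  exists i; split => // z hz [[h1 h2]|[h1 h2]]; first lra.
  by apply: (hno' z hz); split => //; lra.
have hex : exists z, Mk cut n z /\ rr n < z.
  exists (rr 0%N); split; first by left; exists 0%N.
  case: (neqlt (nm 0%N n0)) => // h; exfalso; apply: hno; exists (rr 0%N).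
  by split => //; left; exists 0%N.
have [z0 [hz0 z0n hmin]] := Mk_min hex.
case: hz0 => [[j jn ej]|[m hm ej]]; subst z0.
  exists j; split => // z hz [[h1 h2]|[h1 h2]]; first lra.
  by have := hmin z hz h1; lra.
have [_ [i [ilt hi hno']]] := hi2 m hm.
exfalso; case: (neqlt (nm i ilt)) => hin.
  by apply: hno; exists (rr i); split => //; left; exists i.
have : Mk cut n (rr i) by left; exists i.
by move/hmin => /(_ hin); lra.
Qed.

Lemma geom1 {a p nn c0 c : R} : btw a p c0 -> ~ btw p nn c0 -> ~ btw p nn a ->
  c0 <> nn -> a <> nn -> btw p nn c -> btw a nn c0 \/ btw a nn c.
Proof.
rewrite /btw => h1 h2 h3 /neqlt h4 /neqlt h5 h6; lra.
Qed.

Lemma geomA {cm rn ri rp c : R} : cm < rn /\ rn < ri -> btw rp rn c ->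
  ~ (cm < rp /\ rp < ri) -> ~ btw rp rn cm -> (rp < cm \/ cm < rp) -> ~ (cm < c /\ c < rn).
Proof. rewrite /btw => *; lra. Qed.

Lemma geomB {cm rn ri rp c : R} : ~ (cm < rn /\ rn < ri) -> btw rp rn c ->
  ~ (cm < rp /\ rp < ri) -> ~ btw rp rn cm -> (rp < cm \/ cm < rp) ->
  (rn < cm \/ cm < rn) -> ~ (cm < c /\ c < ri).
Proof. rewrite /btw => *; lra. Qed.

Lemma geomA' {cm rn ri rp c : R} : ri < rn /\ rn < cm -> btw rp rn c ->
  ~ (ri < rp /\ rp < cm) -> ~ btw rp rn cm -> (rp < cm \/ cm < rp) -> ~ (rn < c /\ c < cm).
Proof. rewrite /btw => *; lra. Qed.

Lemma geomB' {cm rn ri rp c : R} : ~ (ri < rn /\ rn < cm) -> btw rp rn c ->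
  ~ (ri < rp /\ rp < cm) -> ~ btw rp rn cm -> (rp < cm \/ cm < rp) ->
  (rn < cm \/ cm < rn) -> ~ (ri < c /\ c < cm).
Proof. rewrite /btw => *; lra. Qed.

Lemma geomC {rp rn c z : R} : (rp < c /\ c < rn) -> (z = rn \/ z = c \/ ~ btw rp rn z) ->
  ~ (c < z /\ z < rn) /\ ~ (rp < z /\ z < c).
Proof. rewrite /btw => h [->|[->|h2]]; lra. Qed.

Lemma geomC' {rp rn c z : R} : (rn < c /\ c < rp) -> (z = rn \/ z = c \/ ~ btw rp rn z) ->
  ~ (c < z /\ z < rp) /\ ~ (rn < z /\ z < c).
Proof. rewrite /btw => h [->|[->|h2]]; lra. Qed.

Lemma btw_sym {a b z : R} : btw a b z -> btw b a z.
Proof. rewrite /btw; lra. Qed.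

Lemma Good_step n : (0 < n)%N -> Good n -> Good n.+1.
Proof.
move=> n0 G.
have [p0 hp0] := @exist_adj n n0 G.
have hpn : ParOK n.
  rewrite /ParOK par_def; apply: (@xgetPex _ 0%N [set p | (p < n)%N /\ adjC cut n p]).
  by exists p0.
case: G => [hpar [hi1 hi2]].
case: (hpn) => pn adjp.
set p := par n in pn adjp.
have hc := cut_btw pn; rewrite -/p in hc.
have cn : forall i, cut n <> rr i by move=> i; apply: cut_neq.
have cm : forall m, (0 < m < n)%N -> forall i, cut m <> rr i.
  by move=> m hm i; apply: cut_neq; case: (hpar m hm).
have oldm : forall m, (0 < m < n)%N -> Mk cut n (cut m) by move=> m hm; right; exists m.
have oldp : forall i, (i < n)%N -> Mk cut n (rr i) by move=> i hi; left; exists i.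
have nm : forall i, (i < n)%N -> rr i <> rr n.
  by move=> i ilt; apply: rr_neq => e; move: ilt; rewrite e ltnn.
have hwid : forall m, (0 < m < n)%N -> (0 < m < n.+1)%N.
  by move=> m /andP[-> /ltnW]; rewrite ltnS.
split; [|split].
- move=> m /andP[m0]; rewrite ltnS leq_eqVlt => /orP[/eqP->//|mn].
  by apply: hpar; rewrite m0.
- have key : forall j, (j < n)%N -> exists2 m, (0 < m < n.+1)%N & btw (rr j) (rr n) (cut m).
    move=> j jn.
    case: (eqVneq j p) => [->|jp].
      by exists n; [rewrite n0 /=|].
    have jp2 : j <> p by apply/eqP.
    have [m0 hm0 hb] := hi1 j p jn pn jp2.
    have := geom1 hb (adjp _ (oldm _ hm0)) (adjp _ (oldp _ jn)) (cm _ hm0 n) (nm _ jn) hc.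
    case=> h.
      by exists m0 => //; apply: hwid.
    by exists n => //; rewrite n0 /=.
  have ltS : forall k, (k < n.+1)%N -> k = n \/ (k < n)%N.
    by move=> k; rewrite ltnS leq_eqVlt => /orP[/eqP|]; auto.
  move=> i j /ltS [->|ilt] /ltS [->|jlt] ij //.
  + by have [m hm hb] := key j jlt; exists m => //; apply: btw_sym.
  + exact: key.
  + by have [m hm hb] := hi1 i j ilt jlt ij; exists m => //; apply: hwid.
- move=> m /andP[m0]; rewrite ltnS leq_eqVlt => /orP[/eqP->|mn].
    have h1 : forall z, Mk cut n.+1 z -> z = rr n \/ z = cut n \/ ~ btw (rr p) (rr n) z.
      move=> z /MkS [hz|[->|[_ ->]]]; [right; right; exact: adjp|by left|by right; left].
    case: hc => hc.
      split.
        by exists n; split => //; [case: hc|move=> z /h1 /(geomC hc) []].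
      exists p; split => //; first by apply: (ltn_trans pn).
        by case: hc.
      by move=> z /h1 /(geomC hc) [].
    split.
      exists p; split => //; first by apply: (ltn_trans pn).
        by case: hc.
      by move=> z /h1 /(geomC' hc) [].
    by exists n; split => //; [case: hc|move=> z /h1 /(geomC' hc) []].
  have hm : (0 < m < n)%N by rewrite m0.
  have cmp := cm _ hm p; have cmn := cm _ hm n.
  have adjm := adjp _ (oldm _ hm).
  case: (hi2 m hm) => [[i [ilt hi hno]] [i' [ilt' hi' hno']]].
  split.
    have oldpi := hno _ (oldp _ pn).
    case: (pselect (cut m < rr n /\ rr n < rr i)) => hcase.
      exists n; split => //; first by case: hcase.
      move=> z /MkS [hz|[->|[_ ->]]].
      + move=> [h1 h2]; apply: (hno z hz); split => //; case: hcase => _ h3.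
        exact: lt_trans h2 h3.
      + by case=> _; rewrite ltxx.
      + exact: (geomA hcase hc oldpi adjm (neqlt (nesym cmp))).
    exists i; split => //; first by apply: ltn_trans ilt _.
    move=> z /MkS [hz|[->|[_ ->]]] //; first exact: hno.
    exact: (geomB hcase hc oldpi adjm (neqlt (nesym cmp)) (neqlt (nesym cmn))).
  have oldpi := hno' _ (oldp _ pn).
  case: (pselect (rr i' < rr n /\ rr n < cut m)) => hcase.
    exists n; split => //; first by case: hcase.
    move=> z /MkS [hz|[->|[_ ->]]].
    + move=> [h1 h2]; apply: (hno' z hz); split => //; case: hcase => h3 _.
      exact: lt_trans h3 h1.
    + by case; rewrite ltxx.
    + exact: (geomA' hcase hc oldpi adjm (neqlt (nesym cmp))).
  exists i'; split => //; first by apply: ltn_trans ilt' _.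
  move=> z /MkS [hz|[->|[_ ->]]] //; first exact: hno'.
  exact: (geomB' hcase hc oldpi adjm (neqlt (nesym cmp)) (neqlt (nesym cmn))).
Qed.

Lemma Good_all {n} : (0 < n)%N -> Good n.
Proof.
elim: n => [//|n IH] _.
case: n IH => [_|n IH]; last by apply: Good_step => //; apply: IH.
split; [|split].
- by move=> m /andP[/leq_trans h /h].
- by move=> i j; rewrite !ltnS !leqn0 => /eqP-> /eqP->.
- by move=> m /andP[/leq_trans h /h].
Qed.

Lemma parOK {m} : (0 < m)%N -> ParOK m.
Proof. move=> m0; case: (Good_all (ltn0Sn m)) => h _; apply: h; by rewrite m0 /=. Qed.

Lemma par_lt {m} : (0 < m)%N -> (par m < m)%N.
Proof. by move/parOK => []. Qed.

Lemma inv1 n : Inv1 n.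
Proof.
case: n => [i j //|n]; by case: (Good_all (ltn0Sn n)) => _ [].
Qed.


Lemma Mk_neq_new {n w z} : (n <= w)%N -> Mk cut n z -> z <> rr w.
Proof.
move=> nw [[j jn ->]|[m /andP[m0 mn] ->]].
  apply: rr_neq => e; move: jn; rewrite e => /leq_trans /(_ nw); by rewrite ltnn.
by apply: cut_neq; apply: par_lt.
Qed.

Definition Icell T v (x : R) := forall z, Mk cut T.+1 z -> z <> rr v ->
  (z < rr v -> z < x) /\ (rr v < z -> x < z).

Lemma geomD {u w z : R} : z < u -> ~ btw u w z -> (z < w \/ w < z) -> z < w.
Proof. rewrite /btw => *; lra. Qed.
Lemma geomD' {u w z : R} : u < z -> ~ btw u w z -> (z < w \/ w < z) -> w < z.
Proof. rewrite /btw => *; lra. Qed.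

Lemma cell_fw {T v u w} : (T < w)%N -> Icell T v (rr u) -> adjC cut w u -> Icell T v (rr w).
Proof.
move=> Tw hc adj z hz zv.
have hzw : Mk cut w z by apply: Mk_mono hz.
have nzw := neqlt (Mk_neq_new Tw hz).
have := hc z hz zv; case=> h1 h2; split => h.
  exact: (geomD (h1 h) (adj z hzw) nzw).
exact: (geomD' (h2 h) (adj z hzw) nzw).
Qed.

Lemma geomE {u w z : R} : z < w -> ~ btw u w z -> (z < u \/ u < z) -> z < u.
Proof. rewrite /btw => *; lra. Qed.
Lemma geomE' {u w z : R} : w < z -> ~ btw u w z -> (z < u \/ u < z) -> u < z.
Proof. rewrite /btw => *; lra. Qed.
Lemma geomF {u v w c : R} : u < v -> btw u v c -> (c < v -> c < w) -> (v < c -> w < c) ->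
   (c < v \/ v < c) -> ~ btw u w c -> False.
Proof. rewrite /btw => *; lra. Qed.
Lemma geomF' {u v w c : R} : v < u -> btw u v c -> (c < v -> c < w) -> (v < c -> w < c) ->
   (c < v \/ v < c) -> ~ btw u w c -> False.
Proof. rewrite /btw => *; lra. Qed.

Lemma cell_bw {T v u w} : (v < T.+1)%N -> (T < w)%N -> Icell T v (rr w) ->
  adjC cut w u -> Icell T v (rr u).
Proof.
move=> vT Tw hc adj z hz zv.
have [h1 h2] := hc z hz zv.
have hzw : Mk cut w z by apply: Mk_mono hz.
case: (pselect (z = rr u)) => zu; last first.
  have nzu := neqlt zu.
  split => h.
    exact: (geomE (h1 h) (adj z hzw) nzu).
  exact: (geomE' (h2 h) (adj z hzw) nzu).
exfalso.
have uT : (u < T.+1)%N.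
  case: hz => [[j jn ej]|[m hm ej]].
    by move: ej; rewrite zu => /rr_inj ->.
  by exfalso; move: ej; rewrite zu => /esym; apply: cut_neq; apply: par_lt; case/andP: hm.
have uv : u <> v by move=> e; apply: zv; rewrite zu e.
have [m hm hb] := @inv1 T.+1 u v uT vT uv.
have hmk : Mk cut T.+1 (cut m) by right; exists m.
have cv : cut m <> rr v by apply: cut_neq; apply: par_lt; case/andP: hm.
have [k1 k2] := hc _ hmk cv.
have hmw : Mk cut w (cut m) by apply: Mk_mono hmk.
have hadj := adj _ hmw.
case: (neqlt (rr_neq uv)) => huv.
  exact: (geomF huv hb k1 k2 (neqlt cv) hadj).
exact: (geomF' huv hb k1 k2 (neqlt cv) hadj).
Qed.

Lemma lemB {T v} : (v < T.+1)%N -> forall {w}, (T < w)%N -> Icell T v (rr w) ->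
  exists c, [/\ par c = v, (T < c)%N & dos par c w].
Proof.
move=> vT w; elim/ltn_ind: w => w IH Tw hw.
have w0 : (0 < w)%N by apply: leq_ltn_trans Tw.
have [pw adjw] := parOK w0.
have hu := cell_bw vT Tw hw adjw.
case: (ltnP T (par w)) => hT.
  have [c [pc Tc dc]] := IH _ pw hT hu.
  by exists c; split => //; apply: dos_step.
exists w; split => //; last exact: dos_refl.
case: (eqVneq (par w) v) => // /eqP nv; exfalso.
have hmk : Mk cut T.+1 (rr (par w)) by left; exists (par w).
have := hu _ hmk (rr_neq nv); case=> h1 h2.
case: (neqlt (rr_neq nv)) => h.
  by have := h1 h; rewrite ltxx.
by have := h2 h; rewrite ltxx.
Qed.

Lemma lemA {T v c} : par c = v -> (T < c)%N -> forall {w}, dos par c w -> Icell T v (rr w).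
Proof.
move=> pc Tc w dw.
have hv : Icell T v (rr v) by move=> z _ _; split.
elim: dw => [|w' w0 dw IH].
  have c0 : (0 < c)%N by apply: leq_ltn_trans Tc.
  have [_ adjc] := parOK c0; rewrite pc in adjc.
  exact: (cell_fw Tc hv adjc).
have [_ adjw] := parOK w0.
have cw := dos_le (@par_lt) dw.
have Tw : (T < w')%N by apply: (leq_trans Tc); apply: (leq_trans cw); apply: ltnW; apply: par_lt.
exact: (cell_fw Tw IH adjw).
Qed.

Lemma Q_cont k M : exists2 e : rat, 0 < e & forall w, w <> k -> `|r w - r k| < e ->
  exists c, [/\ par c = k, (M < c)%N & dos par c w].
Proof.
pose T := maxn k M.
have [e e0 he] := Mk_sep cut T.+1 (rr k).
have [q] := @rat_in_itvoo R 0 e e0; rewrite in_itv /= => /andP[q0 qe].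
exists q; first by rewrite -(@ltr_rat R) rmorph0.
move=> w wk hw.
have hw' : `|rr w - rr k| < ratr q by rewrite -rmorphB -ratr_norm ltr_rat.
move: hw'; rewrite ltr_distl => /andP[hl hr].
have kT : (k < T.+1)%N by rewrite ltnS leq_maxl.
have Tw : (T < w)%N.
  rewrite ltnNge; apply/negP => wT.
  have hmk : Mk cut T.+1 (rr w) by left; exists w.
  have := he _ hmk (rr_neq wk); lra.
have hcell : Icell T k (rr w).
  move=> z hz zk; have := he z hz zk; split => h; lra.
have [c [pc Tc dc]] := lemB kT Tw hcell.
exists c; split => //; apply: leq_ltn_trans Tc; exact: leq_maxr.
Qed.

Hypothesis r_surj : forall q, exists n, r n = q.

Lemma Q_supp k (e : rat) : 0 < e -> exists T, forall c w, par c = k -> (T < c)%N ->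
  dos par c w -> `|r w - r k| < e.
Proof.
move=> e0.
have [n1 h1] := r_surj (r k + e / 2).
have [n2 h2] := r_surj (r k - e / 2).
exists (maxn n1 n2) => c w pc Tc dw.
have hc := lemA pc Tc dw.
have m1 : Mk cut (maxn n1 n2).+1 (rr n1) by left; exists n1 => //; rewrite ltnS leq_maxl.
have m2 : Mk cut (maxn n1 n2).+1 (rr n2) by left; exists n2 => //; rewrite ltnS leq_maxr.
have n1k : rr n1 <> rr k.
  by rewrite h1 => /ratrI; lra.
have n2k : rr n2 <> rr k.
  by rewrite h2 => /ratrI; lra.
have [_ a1] := hc _ m1 n1k.
have [a2 _] := hc _ m2 n2k.
have b1 : rr k < rr n1 by rewrite h1 ltr_rat; lra.
have b2 : rr n2 < rr k by rewrite h2 ltr_rat; lra.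
have := a1 b1; have := a2 b2; rewrite h1 h2 !ltr_rat => c1 c2.
rewrite ltr_distl; apply/andP; split; lra.
Qed.

Lemma Q_pack : [/\ par 0 = 0%N, (forall m, (0 < m)%N -> (par m < m)%N),
  (forall k M, exists2 e : rat, 0 < e & forall w, w <> k -> `|r w - r k| < e ->
     exists c, [/\ par c = k, (M < c)%N & dos par c w]) &
  (forall k (e : rat), 0 < e -> exists T, forall c w, par c = k -> (T < c)%N ->
     dos par c w -> `|r w - r k| < e)].
Proof.
split.
- exact: par0.
- by move=> m; apply: par_lt.
- exact: Q_cont.
- exact: Q_supp.
Qed.

End QSide.

Lemma enum_rat : exists r : nat -> rat, injective r /\ forall q, exists n, r n = q.
Proof.
have /card_set_bijP[f [_ hi hs]] := card_esym card_rat.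
exists f; split.
  by move=> a b; apply: hi; rewrite ?inE.
move=> q; have [n _ <-] := hs q I. by exists n.
Qed.

Lemma Q_full (R : realType) : exists (r : nat -> rat) (pa : nat -> nat),
  [/\ injective r, (forall q, exists n, r n = q), pa 0 = 0%N /\ (forall m, (0 < m)%N -> (pa m < m)%N),
  (forall k M, exists2 e : rat, 0 < e & forall w, w <> k -> `|r w - r k| < e ->
     exists c, [/\ pa c = k, (M < c)%N & dos pa c w]) &
  (forall k (e : rat), 0 < e -> exists T, forall c w, pa c = k -> (T < c)%N ->
     dos pa c w -> `|r w - r k| < e)].
Proof.
have [r [ri rs]] := enum_rat.
exists r, (par R r).
have [h1 h2 h3 h4] := @Q_pack R r ri rs.
by split.
Qed.


Section YSide.
Variable R : realType.
Variable D : nat -> nat -> R.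
Hypothesis D_ge0 : forall a b, 0 <= D a b.
Hypothesis D_sym : forall a b, D a b = D b a.
Hypothesis D_tri : forall a b c, D a c <= D a b + D b c.
Hypothesis D_pos : forall {a b}, a <> b -> 0 < D a b.
Hypothesis D_refl : forall a, D a a = 0.
Variable B : set nat.
Variable bz : nat.
Hypothesis Bbz : B bz.
Hypothesis crowded : forall {i}, B i -> forall {e}, 0 < e -> exists n, [/\ B n, n <> i & D n i < e].
Variable pa : nat -> nat.
Hypothesis pa0 : pa 0 = 0%N.
Hypothesis pa_lt : forall {m}, (0 < m)%N -> (pa m < m)%N.

Definition P n (prev : nat -> nat) (y : nat) : Prop :=
  [/\ B y, y <> prev (pa n), D y (prev (pa n)) < (n.+1%:R)^-1 &
      forall j, (j < n)%N -> j <> pa n -> 8 * D y (prev (pa n)) < D (prev (pa n)) (prev j)].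

Fixpoint yst (n : nat) : nat -> nat :=
  match n with
  | 0 => fun _ => bz
  | m.+1 => let prev := yst m in
     let yn := if m is 0 then bz else xget bz (P m prev) in
     fun j => if j == m then yn else prev j
  end.

Definition y n := yst n.+1 n.

Lemma yst_agree {m j} : (j < m)%N -> yst m j = y j.
Proof.
elim: m => [//|m IH]; rewrite ltnS leq_eqVlt => /orP[/eqP->|jm] //.
by rewrite /= (ltn_eqF jm) IH.
Qed.

Lemma y_def {n} : (0 < n)%N -> y n = xget bz (P n y).
Proof.
case: n => [//|n] _.
rewrite /y /= eqxx.
have e : P n.+1 (yst n.+1) = P n.+1 y.
  rewrite /P; apply/funext => z; apply/propext.
  have hp := pa_lt (ltn0Sn n).
  rewrite (yst_agree hp); split; case=> h1 h2 h3 h4; split => // j jn jp.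
    by rewrite -(yst_agree jn); apply: h4.
  by rewrite (yst_agree jn); apply: h4.
by rewrite e.
Qed.

Lemma y0 : y 0 = bz.
Proof. by []. Qed.

Definition Yok n := B (y n) /\ (forall j, (j < n)%N -> y j <> y n) /\ ((0 < n)%N -> P n y (y n)).

Lemma Yok_all n : Yok n.
Proof.
elim/ltn_ind: n => n IH.
case: (posnP n) => [->|n0].
  by split; [rewrite y0|split].
have hp := pa_lt n0.
have [Bp _] := IH _ hp.
have hex : exists z, P n y z.
  have hf : forall j, (j < n)%N -> j <> pa n -> 0 < D (y (pa n)) (y j) / 8.
    move=> j jn jp; apply: divr_gt0 => //; apply: D_pos.
    case: (ltngtP j (pa n)) => h.
    - by have [_ [h1 _]] := IH _ hp; apply: nesym; apply: h1.
    - by have [_ [h1 _]] := IH _ jn; apply: h1.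
    - by move: jp; rewrite h.
  have [e e0 he] := @fin_pos R (fun j => D (y (pa n)) (y j) / 8) (fun j => j <> pa n) n hf.
  have [f [f0 fe fn]] : exists f, [/\ 0 < f, f <= e & f <= (n.+1%:R)^-1].
    case: (lerP e (n.+1%:R)^-1) => h; first by exists e; split.
    exists (n.+1%:R)^-1; split; [by rewrite invr_gt0 ltr0n|exact: ltW|by []].
  have [z [Bz zn Dz]] := crowded Bp f0.
  exists z; split => //; first by apply: lt_le_trans Dz fn.
  move=> j jn jp; have := he j jn jp; lra.
have hP : P n y (y n) by rewrite {1}(y_def n0); apply: xgetPex.
case: (hP) => By yp Dy h8.
split => //; split => // j jn.
case: (eqVneq j (pa n)) => [->|/eqP jp]; first by apply: nesym.
move=> e; have h := h8 j jn jp; rewrite e in h.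
have := D_sym (y (pa n)) (y n); have := D_pos yp; lra.
Qed.

Lemma y_inj : injective y.
Proof.
move=> i j e; case: (ltngtP i j) => // h.
- by have [_ [h1 _]] := Yok_all j; case: (h1 i h).
- by have [_ [h1 _]] := Yok_all i; case: (h1 j h); rewrite e.
Qed.

Lemma y_B n : B (y n).
Proof. by case: (Yok_all n). Qed.

Definition t n := D (y n) (y (pa n)).

Lemma t_pos {n} : (0 < n)%N -> 0 < t n.
Proof.
move=> n0; apply: D_pos => e; have h := @y_inj _ _ e.
by move: (pa_lt n0); rewrite -h ltnn.
Qed.

Lemma t_small {n} : (0 < n)%N -> t n < (n.+1%:R)^-1.
Proof. by move=> n0; have [_ [_ /(_ n0) []]] := Yok_all n. Qed.

Lemma t_sep {n j} : (0 < n)%N -> (j < n)%N -> j <> pa n -> 8 * t n < D (y (pa n)) (y j).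
Proof. by move=> n0 jn jp; have [_ [_ /(_ n0) [_ _ _ h]]] := Yok_all n; apply: h. Qed.

Lemma t_child {n} : (0 < pa n)%N -> 8 * t n < t (pa n).
Proof.
move=> p0.
have n0 : (0 < n)%N by move: p0; case: n => //; rewrite pa0.
have jn : (pa (pa n) < n)%N := ltn_trans (pa_lt p0) (pa_lt n0).
have jp : pa (pa n) <> pa n by move=> e; move: (pa_lt p0); rewrite e ltnn.
exact: (t_sep n0 jn jp).
Qed.

Lemma t_sib {c1 c2} : (0 < c1)%N -> (c1 < c2)%N -> pa c1 = pa c2 -> 8 * t c2 < t c1.
Proof.
move=> c10 c12 e.
have c20 : (0 < c2)%N by apply: ltn_trans c12.
have jp : c1 <> pa c2 by move=> e2; move: (pa_lt c10); rewrite e -e2 ltnn.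
have := t_sep c20 c12 jp.
by rewrite /t -e (D_sym (y (pa c1)) (y c1)).
Qed.

Lemma Y1 {c w} : (0 < c)%N -> dos pa c w -> 7 * D (y w) (y c) <= t c - t w.
Proof.
move=> c0; elim=> [|w' w0 dw IH].
  by rewrite D_refl; lra.
have cw := dos_le (@pa_lt) dw.
have p0 : (0 < pa w')%N by apply: leq_trans cw.
have h8 := t_child p0.
have tri := D_tri (y w') (y (pa w')) (y c).
rewrite /t in h8 IH tri *; lra.
Qed.


Lemma t_ge0 n : 0 <= t n.
Proof. exact: D_ge0. Qed.

Definition inB c z := 4 * D z (y c) < t c.

Lemma nest1 {c z} : (0 < pa c)%N -> inB c z -> inB (pa c) z.
Proof.
move=> p0; rewrite /inB => h.
have h8 := t_child p0.
have tri := D_tri z (y c) (y (pa c)).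
have tp := t_pos p0.
rewrite /t in h h8 tri tp *; lra.
Qed.

Lemma nest {a b z} : (0 < a)%N -> dos pa a b -> inB b z -> inB a z.
Proof.
move=> a0; elim=> [//|b' b0 db IH] hb.
apply: IH; apply: nest1 => //.
exact: leq_trans a0 (dos_le (@pa_lt) db).
Qed.

Lemma sib_disj {c1 c2 z} : (0 < c1)%N -> (0 < c2)%N -> c1 <> c2 -> pa c1 = pa c2 ->
  inB c1 z -> inB c2 z -> False.
Proof.
wlog h12 : c1 c2 / (c1 < c2)%N.
  move=> hw c10 c20 c12 e h1 h2.
  case: (ltngtP c1 c2) => h.
  - exact: (hw c1 c2).
  - exact: (hw c2 c1 h c20 c10 (nesym c12) (esym e) h2 h1).
  - by apply: c12.
move=> c10 c20 _ e; rewrite /inB => h1 h2.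
have hs := t_sib c10 h12 e.
have tri1 := D_tri (y c1) (y c2) (y (pa c1)).
have tri2 := D_tri (y c1) z (y c2).
have s1 := D_sym (y c1) z.
have tp := t_pos c10.
move: hs tri1 tri2 s1 tp h1 h2; rewrite /t -e => hs tri1 tri2 s1 tp h1 h2; clear e; lra.
Qed.

Lemma not_in_child {c} : (0 < c)%N -> ~ inB c (y (pa c)).
Proof.
move=> c0; rewrite /inB => h.
have := t_pos c0; have := D_sym (y (pa c)) (y c); rewrite /t in h *; lra.
Qed.

Lemma via_child {a b} : dos pa a b -> b <> a -> exists c, [/\ pa c = a, (0 < c)%N & dos pa c b].
Proof.
elim=> [//|b' b0 db IH] ba.
case: (eqVneq (pa b') a) => [e|/eqP ne].
  by exists b'; split => //; apply: dos_refl.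
have [c [pc c0 dc]] := IH ne.
by exists c; split => //; apply: dos_step.
Qed.

Lemma dos0 w : dos pa 0 w.
Proof.
elim/ltn_ind: w => w IH.
case: (posnP w) => [->|w0]; first exact: dos_refl.
by apply: dos_step => //; apply: IH; apply: pa_lt.
Qed.

Lemma inter_aux n : forall a b z, (a + b <= n)%N -> (0 < a)%N -> (0 < b)%N ->
  inB a z -> inB b z -> dos pa a b \/ dos pa b a.
Proof.
elim: n => [|n IH] a b z hn a0 b0 ha hb.
  by move: hn; rewrite leqn0 addn_eq0 => /andP[/eqP ea _]; move: a0; rewrite ea.
have step : forall a b, (b < a)%N -> (a + b <= n.+1)%N -> (0 < a)%N -> (0 < b)%N ->
    inB a z -> inB b z -> dos pa a b \/ dos pa b a.
  move=> u v ba hu u0 v0 ha' hb'.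
  have pa_a := pa_lt u0.
  case: (posnP (pa u)) => [p0|p0].
    have v_ne : v <> 0%N by move=> e; move: v0; rewrite e.
    have [c [pc c0 dc]] := via_child (dos0 v) v_ne.
    case: (eqVneq c u) => [ca|/eqP ca]; first by left; rewrite -ca.
    exfalso; apply: (sib_disj u0 c0 (nesym ca) _ ha' (nest c0 dc hb')).
    by rewrite p0 pc.
  have hp := nest1 p0 ha'.
  have hu' : (pa u + v <= n)%N.
    by rewrite -ltnS (leq_trans _ hu) // ltn_add2r.
  case: (IH _ _ _ hu' p0 v0 hp hb') => hd.
    case: (eqVneq v (pa u)) => [eb|/eqP nb].
      by right; apply: dos_step => //; rewrite -eb; apply: dos_refl.
    have [c [pc c0 dc]] := via_child hd nb.
    case: (eqVneq c u) => [ca|/eqP ca]; first by left; rewrite -ca.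
    exfalso; apply: (sib_disj u0 c0 (nesym ca) _ ha' (nest c0 dc hb')).
    by rewrite pc.
  by right; apply: dos_step.
case: (ltngtP a b) => h.
- by case: (step b a h _ b0 a0 hb ha) => [|h1|h1]; [rewrite addnC|right|left].
- exact: step.
- by left; rewrite h; apply: dos_refl.
Qed.

Lemma Y_open k : exists2 eta, 0 < eta & forall w, D (y w) (y k) < eta -> dos pa k w.
Proof.
case: (posnP k) => [->|k0].
  by exists 1 => // w _; apply: dos0.
exists (t k / 4); first by apply: divr_gt0 => //; apply: t_pos.
move=> w hw.
have hk : inB k (y w) by rewrite /inB; lra.
case: (posnP w) => [w0|w0].
  have k_ne : k <> 0%N by move=> e; move: k0; rewrite e.
  have [c [pc c0 dc]] := via_child (dos0 k) k_ne.
  have := nest c0 dc hk; rewrite w0 -pc => /not_in_child; by case.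
have hw' : inB w (y w) by rewrite /inB D_refl mulr0; apply: t_pos.
case: (@inter_aux (k + w) k w (y w) (leqnn (k + w)) k0 w0 hk hw') => // hd.
case: (eqVneq k w) => [->|/eqP kw]; first exact: dos_refl.
have [c [pc c0 dc]] := via_child hd kw.
have := nest c0 dc hk; rewrite -pc => /not_in_child; by case.
Qed.

Lemma Y_near {k c w} : pa c = k -> (0 < c)%N -> dos pa c w ->
  D (y w) (y k) <= 2 * t c /\ t c <= 2 * D (y w) (y k).
Proof.
move=> pc c0 dc.
have h1 := Y1 c0 dc.
have h2 := t_ge0 w.
have tri1 := D_tri (y w) (y c) (y k).
have tri2 := D_tri (y c) (y w) (y k).
have s := D_sym (y c) (y w).
have h0 := D_ge0 (y w) (y c).
move: tri1 tri2; rewrite /t pc in h1 h2 *; move=> tri1 tri2.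
split; lra.
Qed.

Lemma Y_pack : exists (yy : nat -> nat) (tt : nat -> R), [/\ injective yy, (forall n, B (yy n)),
  (forall n, (0 < n)%N -> 0 < tt n /\ tt n < (n.+1%:R)^-1),
  (forall k, exists2 eta, 0 < eta & forall w, D (yy w) (yy k) < eta -> dos pa k w) &
  (forall k c w, pa c = k -> (0 < c)%N -> dos pa c w ->
     D (yy w) (yy k) <= 2 * tt c /\ tt c <= 2 * D (yy w) (yy k))].
Proof.
exists y, t; split.
- exact: y_inj.
- exact: y_B.
- by move=> n n0; split; [apply: t_pos|apply: t_small].
- exact: Y_open.
- by move=> k c w; apply: Y_near.
Qed.

End YSide.


Section Main.
Variable R : realType.
Variable X : topologicalType.
Variable x : nat -> X.
Variable d : X -> X -> R.
Hypothesis x_inj : injective x.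
Hypothesis hd : metric_on (range x) d.
Hypothesis hcomp : compatible (range x) d.

Let rx a : range x (x a). Proof. exact: imageT. Qed.

Let D a b := d (x a) (x b).

Let D_ge0 a b : 0 <= D a b.
Proof. by case: hd => h _; apply: h. Qed.
Let D_sym a b : D a b = D b a.
Proof. by case: hd => _ [_ [h _]]; apply: h. Qed.
Let D_tri a b c : D a c <= D a b + D b c.
Proof. by case: hd => _ [_ [_ h]]; apply: h. Qed.
Let D_refl a : D a a = 0.
Proof. by case: hd => _ [h _]; apply/(h _ _ (rx a) (rx a)). Qed.
Let D_pos a b : a <> b -> 0 < D a b.
Proof.
move=> ab; rewrite lt_neqAle D_ge0 andbT; apply/eqP => /esym h.
case: hd => _ [h2 _]; apply: ab; apply: x_inj.
by apply/(h2 _ _ (rx a) (rx b)).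
Qed.

Lemma ball_tri {u s s' e} : d u s < e -> d s s' < e - d u s -> range x u -> range x s ->
  range x s' -> d u s' < e.
Proof.
move=> h1 h2 ru rs rs'; case: hd => _ [_ [_ h]].
have := h u s s' ru rs rs'; lra.
Qed.

Lemma relopen_fw (C : set nat) (U : set X) : rel_open (x @` C) U ->
  forall u, U u -> exists2 e, 0 < e & forall s, (x @` C) s -> d u s < e -> U s.
Proof.
case=> V [oV ->] u [Vu Cu].
have sub : V `&` range x `<=` range x by move=> z [].
have ro : rel_open (range x) (V `&` range x) by exists V.
have := (proj1 (hcomp _ sub)) ro u.
case: Cu => a _ ua.
have : (V `&` range x) u by split => //; rewrite -ua.
move=> /[swap] /[apply] [[e [e0 he]]].
exists e => // s [b Cb sb] dus; split; last by exists b.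
have rs : range x s by rewrite -sb.
by have [] := he s rs dus.
Qed.

Lemma relopen_bw (C : set nat) (U : set X) : U `<=` x @` C ->
  (forall u, U u -> exists2 e, 0 < e & forall s, (x @` C) s -> d u s < e -> U s) ->
  rel_open (x @` C) U.
Proof.
move=> UC hU.
pose U' := [set s | range x s /\ exists u e, [/\ U u, 0 < e,
   (forall s', (x @` C) s' -> d u s' < e -> U s') & d u s < e]].
have sub : U' `<=` range x by move=> s [].
have [_ hb] := hcomp _ sub.
have : rel_open (range x) U'.
  apply: hb => s [rs [u [e [Uu e0 he dus]]]].
  exists (e - d u s); split; first lra.
  move=> s' rs' ds'; split => //; exists u, e; split => //.
  have ru : range x u by case: (UC u Uu) => a _ <-.
  exact: (ball_tri dus ds' ru rs rs').
case=> V [oV eV]; exists V; split => //.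
apply/seteqP; split => z.
  move=> Uz; split; last exact: UC.
  have : U' z.
    split; first by case: (UC z Uz) => a _ <-.
    have [e e0 he] := hU z Uz; exists z, e; split => //.
    by case: (UC z Uz) => a _ <-; have := D_refl a; rewrite /D => ->.
  by rewrite eV => -[].
move=> [Vz Cz].
have : U' z by rewrite eV; split => //; case: Cz => a _ <-.
by case=> _ [u [e [Uu e0 he dz]]]; apply: he.
Qed.

Lemma homeo_crowded (B : set nat) : homeo_Q (x @` B) ->
  B !=set0 /\ forall i, B i -> forall j : nat,
    exists n, (B `&` Aij x d i j) n /\ n <> i.
Proof.
case=> f [g [h1 [h2 [h3 h4]]]].
split.
  by have [[a Ba _] _] := h2 0; exists a.
move=> i Bi j; apply: contrapT => hno.
pose U := [set x i].
have UC : U `<=` x @` B by move=> z ->; exists i.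
have oU : rel_open (x @` B) U.
  apply: relopen_bw => // u ->.
  exists (j.+1%:R^-1); first by rewrite invr_gt0 ltr0n.
  move=> s [n Bn <-] dn.
  case: (pselect (n = i)) => [->//|ni]; exfalso; apply: hno; exists n; split => //.
  by split => //; rewrite /Aij /=; rewrite -/(D n i) D_sym.
have gU : U (g (f (x i))) by rewrite /U h1 //; exists i.
have [e [e0 he]] := h4 U oU UC (f (x i)) gU.
have := he (f (x i) + e / 2).
have -> : `|f (x i) + e / 2 - f (x i)| = e / 2.
  by rewrite addrAC subrr add0r ger0_norm //; lra.
move=> /(_ ltac:(lra)) /= hg.
have hq := (h2 (f (x i) + e / 2)).2.
rewrite /U /= in hg; rewrite hg in hq.
move: hq; lra.
Qed.


Lemma crowded_homeo (B : set nat) : B !=set0 ->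
  (forall i, B i -> forall j : nat, exists n, (B `&` Aij x d i j) n /\ n <> i) ->
  exists C, C `<=` B /\ homeo_Q (x @` C).
Proof.
move=> [b0 Bb0] hcr.
have crowded : forall i, B i -> forall e, 0 < e -> exists n, [/\ B n, n <> i & D n i < e].
  move=> i Bi e e0.
  have [k hk] := ltr_add_invr e0; rewrite add0r in hk.
  have [n [[Bn hn] ni]] := hcr i Bi k.
  by exists n; split => //; apply: lt_trans hk.
have [r [pa [ri rs [pa0 palt] Qc Qs]]] := Q_full R.
have [yy [tt [yi yB ts Yo Yn]]] :=
  @Y_pack R D D_ge0 D_sym D_tri D_pos D_refl B b0 Bb0 crowded pa pa0 palt.
pose idx q := xget 0%N [set n | r n = q].
have idxP q : r (idx q) = q by apply: (@xgetPex _ 0%N [set n | r n = q]); apply: rs.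
have idx_r n : idx (r n) = n by apply: ri; rewrite idxP.
pose f z := r (xget 0%N [set n | x (yy n) = z]).
pose g q := x (yy (idx q)).
have fE n : f (x (yy n)) = r n.
  rewrite /f; congr r; apply: yi; apply: x_inj.
  by apply: (@xgetPex _ 0%N [set m | x (yy m) = x (yy n)]); exists n.
have gE n : g (r n) = x (yy n) by rewrite /g idx_r.
have gI q : g q = x (yy (idx q)) by [].
have Cx : forall s, (x @` range yy) s -> exists n, s = x (yy n).
  by move=> s [m [n _ <-] <-]; exists n.
have xC : forall n, (x @` range yy) (x (yy n)) by move=> n; exists (yy n) => //; exists n.
exists (range yy); split; first by move=> _ [n _ <-].
exists f, g; split; [|split; [|split]].
- by move=> s /Cx [n ->]; rewrite fE gE.
- by move=> q; split; [rewrite gI; apply: xC|rewrite gI fE idxP].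
- move=> U oU; apply: relopen_bw; first by move=> z [].
  move=> u [/Cx [k ->] /= hU]; rewrite fE in hU.
  have [del [del0 hdel]] := oU _ hU.
  have [T hT] := Qs k del del0.
  have [eta eta0 heta] := Yo k.
  have [e2 e20 he2] := @fin_pos R (fun c => tt c / 2) (fun c => (0 < c)%N) T.+1
     (fun c _ c0 => divr_gt0 (proj1 (ts c c0)) (ltr0Sn _ 1)).
  have [eps [eps0 epse epse2]] : exists eps, [/\ 0 < eps, eps <= eta & eps <= e2].
    case: (lerP eta e2) => h; first by exists eta; split.
    by exists e2; split => //; apply: ltW.
  exists eps => // s /Cx [w ->] dw.
  split; first exact: xC.
  rewrite /= fE.
  have dw' : D (yy w) (yy k) < eps by rewrite D_sym.
  have dkw := heta w (lt_le_trans dw' epse).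
  case: (eqVneq w k) => [->//|/eqP wk].
  have [c [pc c0 dc]] := via_child pa dkw wk.
  have [h1 h2] := Yn k c w pc c0 dc.
  case: (ltnP T c) => hc.
    by apply: hdel; apply: hT dc.
  exfalso.
  have := he2 c (leq_ltn_trans hc (ltnSn T)) c0.
  rewrite /D in dw' h2; lra.
- move=> U oU UC q hq.
  have [e e0 he] := @relopen_fw _ _ oU _ hq.
  have e20 : 0 < e / 2 by lra.
  have [M hM] := ltr_add_invr e20; rewrite add0r in hM.
  have [del del0 hdel] := Qc (idx q) M.
  exists del; split => // q' hq'.
  rewrite /= gI.
  apply: he; first exact: xC.
  case: (eqVneq (idx q') (idx q)) => [->|/eqP wk].
    by rewrite gI; have := D_refl (yy (idx q)); rewrite /D => ->.
  have hq'' : `|r (idx q') - r (idx q)| < del by rewrite !idxP.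
  have [c [pc hMc dc]] := hdel _ wk hq''.
  have c0 : (0 < c)%N by apply: leq_ltn_trans hMc.
  have [h1 h2] := Yn _ c _ pc c0 dc.
  have [_ tc] := ts c c0.
  have hinv : (c.+1%:R : R)^-1 <= (M.+1%:R)^-1.
    by rewrite lef_pV2 ?posrE ?ltr0n // ler_nat ltnS; apply: ltnW.
  rewrite gI; have := D_sym (yy (idx q)) (yy (idx q')); rewrite /D in h1 * => ->.
  have k1 : tt c < e / 2 := lt_trans (lt_le_trans tc hinv) hM.
  lra.
Qed.


Lemma crowd_e (B : set nat) :
  (forall i, B i -> forall j : nat, exists n, (B `&` Aij x d i j) n /\ n <> i) ->
  forall i, B i -> forall e, 0 < e -> exists n, [/\ B n, n <> i & D n i < e].
Proof.
move=> hcr i Bi e e0.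
have [k hk] := ltr_add_invr e0; rewrite add0r in hk.
have [n [[Bn hn] ni]] := hcr i Bi k.
by exists n; split => //; apply: lt_trans hk.
Qed.

Lemma main_sec :
  (forall A : set nat,
     ~ scattered x A <->
     exists B : set nat, B `<=` A /\ B !=set0 /\
       forall i, B i -> forall j : nat,
         exists n, (B `&` Aij x d i j) n /\ n <> i) /\
  (forall A : set nat, ~ scattered x A ->
     exists B : set nat, B `<=` A /\ ~ scattered x B /\
       forall i, B i -> forall j : nat, ~ scattered x (B `&` Aij x d i j)).
Proof.
have P1 : forall A : set nat,
     ~ scattered x A <->
     exists B : set nat, B `<=` A /\ B !=set0 /\
       forall i, B i -> forall j : nat,
         exists n, (B `&` Aij x d i j) n /\ n <> i.
  move=> A; split.
    move=> hns.
    case: (pselect (exists B, B `<=` A /\ homeo_Q (x @` B))) => [[B [BA hB]]|h]; last first.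
      by exfalso; apply: hns.
    have [ne cr] := @homeo_crowded B hB.
    by exists B.
  move=> [B [BA [ne cr]]] hs.
  have [C [CB hC]] := @crowded_homeo B ne cr.
  by apply: hs; exists C; split => //; apply: subset_trans CB BA.
split => // A hA.
have [B [BA [ne cr]]] := (P1 A).1 hA.
exists B; split => //; split.
  by apply: (P1 B).2; exists B; split; [|split].
move=> i Bi j; apply: (P1 _).2.
exists (B `&` Aij x d i j); split => //; split.
  exists i; split => //; rewrite /Aij /=.
  have := D_refl i; rewrite /D => ->; by rewrite invr_gt0 ltr0n.
move=> k [Bk hk] j'.
rewrite /Aij /= -/(D k i) in hk.
have rho0 : 0 < j.+1%:R^-1 - D k i by rewrite subr_gt0.
have [e [e0 e1 e2]] : exists e, [/\ 0 < e, e <= j.+1%:R^-1 - D k i & e <= j'.+1%:R^-1].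
  case: (lerP (j.+1%:R^-1 - D k i) (j'.+1%:R^-1)) => h; first by exists (j.+1%:R^-1 - D k i); split.
  by exists (j'.+1%:R^-1); split; [rewrite invr_gt0 ltr0n|apply: ltW|].
have [n [Bn nk hn]] := @crowd_e B cr k Bk e e0.
exists n; split => //; split.
  split => //; rewrite /Aij /= -/(D n i).
  apply: (le_lt_trans (D_tri n k i)); rewrite -ltrBrDr; exact: (lt_le_trans hn e1).
by rewrite /Aij /=; exact: (lt_le_trans hn e2).
Qed.

End Main.


Theorem mainTheorem1 (R : realType) (X : topologicalType) (x : nat -> X)
  (d : X -> X -> R)
  (x_inj : injective x)
  (hQ : homeo_Q (range x))
  (hd : metric_on (range x) d)
  (hcomp : compatible (range x) d) :
  (forall A : set nat,
     ~ scattered x A <->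
     exists B : set nat, B `<=` A /\ B !=set0 /\
       forall i, B i -> forall j : nat,
         exists n, (B `&` Aij x d i j) n /\ n <> i) /\
  (forall A : set nat, ~ scattered x A ->
     exists B : set nat, B `<=` A /\ ~ scattered x B /\
       forall i, B i -> forall j : nat, ~ scattered x (B `&` Aij x d i j)).
Proof.
exact: (@main_sec R X x d x_inj hd hcomp).
Qed.
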